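(* Let $A_1,B_1,B_2,C_1,C_2\in\mathbb{C}^{r\times r}$ with $C_1+mI,C_2+mI$ invertible for all $m\ge0$, $A_1B_1=B_1A_1$, $B_2C_i=C_iB_2$ ($i=1,2$) and $C_1C_2=C_2C_1$. Let $n\ge1$ and suppose $A_1+mI$ is invertible for all $m\ge0$. Then $$F_{14}[A_1+nI]=F_{14}+x_1B_1\Big[\sum_{n_1=1}^nF_{14}[A_1+n_1I,B_1+I,C_1+I]\Big]C_1^{-1}+x_2\Big[\sum_{n_1=1}^nF_{14}[A_1+n_1I,B_2+I,C_2+I]\Big]B_2C_2^{-1}+x_3B_1\Big[\sum_{n_1=1}^nF_{14}[A_1+n_1I,B_1+I,C_2+I]\Big]C_2^{-1}.$$ Furthermore, if $A_1-n_1I$ is invertible for $0\le n_1\le n$, then $$F_{14}[A_1-nI]=F_{14}-x_1B_1\Big[\sum_{n_1=0}^{n-1}F_{14}[A_1-n_1I,B_1+I,C_1+I]\Big]C_1^{-1}-x_2\Big[\sum_{n_1=0}^{n-1}F_{14}[A_1-n_1I,B_2+I,C_2+I]\Big]B_2C_2^{-1}-x_3B_1\Big[\sum_{n_1=0}^{n-1}F_{14}[A_1-n_1I,B_1+I,C_2+I]\Big]C_2^{-1}.$$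
   Context: For $M\in\mathbb{C}^{r\times r}$: $(M)_0=I$, $(M)_m=M(M+I)\cdots(M+(m-1)I)$, $(M)^{-1}_m=((M)_m)^{-1}$. The three-variable Lauricella matrix function $$F_{14}=F_{14}[A_1,B_1,B_2;C_1,C_2;x_1,x_2,x_3]=\sum_{m_1,m_2,m_3\ge0}(A_1)_{m_1+m_2+m_3}(B_1)_{m_1+m_3}(B_2)_{m_2}(C_1)^{-1}_{m_1}(C_2)^{-1}_{m_2+m_3}\frac{x_1^{m_1}x_2^{m_2}x_3^{m_3}}{m_1!m_2!m_3!},$$ with scalar variables $x_i$ and matrix products in the written order; identities are of formal power series in the $x_i$. $F_{14}[\dots]$ lists only the shifted parameters, all others unchanged. *)

(* Defs.v *)
From mathcomp Require Import all_boot all_algebra.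
From mathcomp Require Import reals complex.
Set Implicit Arguments. Unset Strict Implicit. Unset Printing Implicit Defensive.
Import GRing.Theory.
Local Open Scope ring_scope.

Section F14.
Variables (R : realType) (r : nat).
Notation C := (R[i]).
Notation M := 'M[C]_r.

Fixpoint mpoch (A : M) (m : nat) : M :=
  if m is k.+1 then mpoch A k *m (A + (k%:R : C)%:M) else 1%:M.

(* A formal power series in x1,x2,x3 with matrix coefficients is represented
   by its coefficient function: fps m1 m2 m3 = coefficient of x1^m1 x2^m2 x3^m3. *)
Definition fps := nat -> nat -> nat -> M.

Definition F14 (A1 B1 B2 C1 C2 : M) : fps := fun m1 m2 m3 =>
  ((m1`! * m2`! * m3`!)%:R : C)^-1 *:
  (mpoch A1 (m1 + m2 + m3) *m mpoch B1 (m1 + m3) *m mpoch B2 m2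
   *m invmx (mpoch C1 m1) *m invmx (mpoch C2 (m2 + m3))).

Definition mulx1 (F : fps) : fps := fun m1 m2 m3 =>
  if m1 is k.+1 then F k m2 m3 else 0.
Definition mulx2 (F : fps) : fps := fun m1 m2 m3 =>
  if m2 is k.+1 then F m1 k m3 else 0.
Definition mulx3 (F : fps) : fps := fun m1 m2 m3 =>
  if m3 is k.+1 then F m1 m2 k else 0.

End F14.

(* Main.v *)
Require Import Defs.
From mathcomp Require Import all_boot all_algebra.
From mathcomp Require Import reals complex.
From mathcomp Require Import ring.
Set Implicit Arguments. Unset Strict Implicit.
Import GRing.Theory Num.Theory.
Local Open Scope ring_scope.

Section Aux.
Variables (R : realType) (r : nat).
Notation C := (R[i]).
Notation M := 'M[C]_r.

Definition commx (X Y : M) := X *m Y = Y *m X.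

Lemma commx_scalD (X A : M) (c : C) : commx X A -> commx X (A + c%:M).
Proof. by rewrite /commx mulmxDr mulmxDl => ->; rewrite scalar_mxC. Qed.

Lemma commx_sym (X Y : M) : commx X Y -> commx Y X.
Proof. by []. Qed.

Lemma commx_poch (X A : M) k : commx X A -> commx X (mpoch A k).
Proof.
move=> h; elim: k => [|k IH] /=; first by rewrite /commx mulmx1 mul1mx.
by rewrite /commx mulmxA IH -!mulmxA (commx_scalD _ h).
Qed.

Lemma commx_refl (A : M) : commx A A. Proof. by []. Qed.

Lemma poch_shift (A : M) k : mpoch A k.+1 = A *m mpoch (A + 1%:M) k.
Proof.
elim: k => [|k IH]; first by rewrite /= mul1mx mulmx1 (raddf0 (@scalar_mx C r)) addr0.
rewrite -[mpoch A k.+2]/(mpoch A k.+1 *m (A + (k.+1%:R : C)%:M)) IH.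
rewrite -[mpoch (A + 1%:M) k.+1]/(mpoch (A + 1%:M) k *m (A + 1%:M + (k%:R : C)%:M)).
rewrite -mulmxA -addrA; congr (_ *m (_ *m (_ + _))).
by rewrite -natr1 raddfD addrC.
Qed.

Lemma poch_diff (A : M) k :
  mpoch (A + 1%:M) k.+1 - mpoch A k.+1 = (k.+1%:R : C) *: mpoch (A + 1%:M) k.
Proof.
rewrite [mpoch A _]poch_shift.
have -> : A *m mpoch (A + 1%:M) k = mpoch (A + 1%:M) k *m A.
  by apply: commx_poch; apply: commx_scalD; exact: commx_refl.
rewrite -[mpoch (A + 1%:M) k.+1]/(mpoch (A + 1%:M) k *m (A + 1%:M + (k%:R : C)%:M)).
rewrite -mulmxBr.
have -> : A + 1%:M + (k%:R : C)%:M - A = ((k.+1)%:R : C)%:M.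
  by rewrite addrC !addrA addNr add0r -natr1 raddfD addrC.
by rewrite scalar_mxC mul_scalar_mx.
Qed.

Lemma poch_diffN (A : M) N :
  mpoch (A + 1%:M) N - mpoch A N = (N%:R : C) *: mpoch (A + 1%:M) N.-1.
Proof. case: N => [|k]; first by rewrite subrr scale0r. exact: poch_diff. Qed.

Lemma invmxMM (A B : M) : A \in unitmx -> B \in unitmx ->
  invmx (A *m B) = invmx B *m invmx A.
Proof.
move=> uA uB; have uAB : A *m B \in unitmx by rewrite unitmx_mul uA uB.
have h : A *m B *m (invmx B *m invmx A) = 1%:M.
  by rewrite -mulmxA (mulmxA B) mulmxV // mul1mx mulmxV.
by rewrite -[invmx (A *m B)]mulmx1 -h mulmxA mulVmx // mul1mx.
Qed.

Lemma commx_inv (X U : M) : U \in unitmx -> commx X U -> commx X (invmx U).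
Proof.
move=> uU h; rewrite /commx.
rewrite -[invmx U *m X]mulmx1 -(mulmxV uU) !mulmxA -(mulmxA _ X U) h.
by rewrite mulmxA mulVmx // mul1mx.
Qed.

Lemma poch_unit (Cm : M) k :
  (forall m : nat, Cm + (m%:R : C)%:M \in unitmx) -> mpoch Cm k \in unitmx.
Proof.
move=> h; elim: k => [|k IH] /=; first exact: unitmx1.
by rewrite unitmx_mul IH h.
Qed.

Lemma poch_inv_shift (Cm : M) k :
  (forall m : nat, Cm + (m%:R : C)%:M \in unitmx) ->
  invmx (mpoch Cm k.+1) = invmx (mpoch (Cm + 1%:M) k) *m invmx Cm.
Proof.
move=> h; rewrite poch_shift invmxMM //.
  by have := h 0%N; rewrite (raddf0 (@scalar_mx C r)) addr0.
apply: poch_unit => m.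
have -> : Cm + 1%:M + (m%:R : C)%:M = Cm + (m.+1%:R : C)%:M.
  by rewrite -addrA -natr1; congr (_ + _); rewrite raddfD addrC.
exact: h.
Qed.


Lemma scal_fact (Q k : nat) :
  ((Q%:R : C)^-1 = ((k.+1 * Q)%N%:R)^-1 * (k.+1)%:R).
Proof.
rewrite natrM invfM mulrC mulrA mulfV ?mul1r //.
by rewrite pnatr_eq0.
Qed.

Variables (B1 B2 C1 C2 : M).
Hypothesis (hC1 : forall m : nat, C1 + (m%:R : C)%:M \in unitmx)
  (hC2 : forall m : nat, C2 + (m%:R : C)%:M \in unitmx)
  (hBC1 : B2 *m C1 = C1 *m B2)
  (hBC2 : B2 *m C2 = C2 *m B2)
  (hCC : C1 *m C2 = C2 *m C1).

Definition T (A' : M) : fps R r := fun m1 m2 m3 =>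
  mulx1 (fun a b c => B1 *m F14 A' (B1 + 1%:M) B2 (C1 + 1%:M) C2 a b c *m invmx C1) m1 m2 m3
  + mulx2 (fun a b c => F14 A' B1 (B2 + 1%:M) C1 (C2 + 1%:M) a b c *m B2 *m invmx C2) m1 m2 m3
  + mulx3 (fun a b c => B1 *m F14 A' (B1 + 1%:M) B2 C1 (C2 + 1%:M) a b c *m invmx C2) m1 m2 m3.

Lemma C1unit : C1 \in unitmx.
Proof. by have := hC1 0%N; rewrite (raddf0 (@scalar_mx C r)) addr0. Qed.
Lemma C2unit : C2 \in unitmx.
Proof. by have := hC2 0%N; rewrite (raddf0 (@scalar_mx C r)) addr0. Qed.

Definition pf m1 m2 m3 := ((m1`! * m2`! * m3`!)%N%:R : C)^-1.
Definition Xf (A : M) m1 m2 m3 :=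
  mpoch (A + 1%:M) (m1 + m2 + m3).-1 *m mpoch B1 (m1 + m3) *m mpoch B2 m2
   *m invmx (mpoch C1 m1) *m invmx (mpoch C2 (m2 + m3)).

Lemma t1 (A : M) (hA : commx B1 (A + 1%:M)) m1 m2 m3 :
  mulx1 (fun a b c => B1 *m F14 (A + 1%:M) (B1 + 1%:M) B2 (C1 + 1%:M) C2 a b c *m invmx C1) m1 m2 m3
  = (pf m1 m2 m3 * m1%:R) *: Xf A m1 m2 m3.
Proof.
case: m1 => [|k] /=; first by rewrite mulr0 scale0r.
rewrite /F14 -scalemxAr -scalemxAl /pf /Xf; congr (_ *: _).
  by rewrite (_ : (k.+1`! * m2`! * m3`!)%N = (k.+1 * (k`! * m2`! * m3`!))%N)
    -?scal_fact // factS; ring.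
rewrite !addSn succnK poch_shift poch_inv_shift //.
have ha : B1 *m mpoch (A + 1%:M) (k + m2 + m3) = mpoch (A + 1%:M) (k + m2 + m3) *m B1.
  exact: commx_poch.
have he : invmx (mpoch C2 (m2 + m3)) *m invmx C1 = invmx C1 *m invmx (mpoch C2 (m2 + m3)).
  apply: commx_inv; first exact: C1unit.
  apply/commx_sym/commx_inv; first exact: poch_unit.
  exact: commx_poch.
rewrite !mulmxA ha -!mulmxA he.
done.
Qed.

Lemma t2 (A : M) m1 m2 m3 :
  mulx2 (fun a b c => F14 (A + 1%:M) B1 (B2 + 1%:M) C1 (C2 + 1%:M) a b c *m B2 *m invmx C2) m1 m2 m3
  = (pf m1 m2 m3 * m2%:R) *: Xf A m1 m2 m3.
Proof.
case: m2 => [|k] /=; first by rewrite mulr0 scale0r.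
rewrite /F14 -!scalemxAl /pf /Xf; congr (_ *: _).
  by rewrite (_ : (m1`! * k.+1`! * m3`!)%N = (k.+1 * (m1`! * k`! * m3`!))%N)
    -?scal_fact // factS; ring.
rewrite addnS addSn succnK [mpoch B2 _]poch_shift addSn poch_inv_shift //.
have hb : B2 *m mpoch (B2 + 1%:M) k = mpoch (B2 + 1%:M) k *m B2.
  by apply: commx_poch; apply: commx_scalD; exact: commx_refl.
have hd : B2 *m invmx (mpoch C1 m1) = invmx (mpoch C1 m1) *m B2.
  apply: commx_inv; first exact: poch_unit.
  exact: commx_poch.
have he : B2 *m invmx (mpoch (C2 + 1%:M) (k + m3)) = invmx (mpoch (C2 + 1%:M) (k + m3)) *m B2.
  apply: commx_inv.
    apply: poch_unit => m.
    have -> : C2 + 1%:M + (m%:R : C)%:M = C2 + (m.+1%:R : C)%:M.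
      by rewrite -addrA -natr1; congr (_ + _); rewrite raddfD addrC.
    exact: hC2.
  apply: commx_poch; apply: commx_scalD; exact: hBC2.
rewrite hb -!mulmxA (mulmxA B2) hd -!mulmxA (mulmxA B2) he -!mulmxA.
done.
Qed.

Lemma t3 (A : M) (hA : commx B1 (A + 1%:M)) m1 m2 m3 :
  mulx3 (fun a b c => B1 *m F14 (A + 1%:M) (B1 + 1%:M) B2 C1 (C2 + 1%:M) a b c *m invmx C2) m1 m2 m3
  = (pf m1 m2 m3 * m3%:R) *: Xf A m1 m2 m3.
Proof.
case: m3 => [|k] /=; first by rewrite mulr0 scale0r.
rewrite /F14 -scalemxAr -scalemxAl /pf /Xf; congr (_ *: _).
  by rewrite (_ : (m1`! * m2`! * k.+1`!)%N = (k.+1 * (m1`! * m2`! * k`!))%N)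
    -?scal_fact // factS; ring.
rewrite !addnS succnK poch_shift poch_inv_shift //.
have ha : B1 *m mpoch (A + 1%:M) (m1 + m2 + k) = mpoch (A + 1%:M) (m1 + m2 + k) *m B1.
  exact: commx_poch.
rewrite !mulmxA ha.
done.
Qed.

Lemma abs_eq (x y : M) : x = y + (x - y).
Proof. by rewrite addrCA subrr addr0. Qed.

Lemma abs_key (P1 P0 b c d e : M) (s : C) :
  s *: (P1 *m b *m c *m d *m e) - s *: (P0 *m b *m c *m d *m e)
  = s *: ((P1 - P0) *m b *m c *m d *m e).
Proof. by rewrite -scalerBr -!mulmxBl. Qed.

Lemma abs_split (s a b c : C) (X : M) :
  s *: (((a + b + c) : C) *: X) = (s * a) *: X + (s * b) *: X + (s * c) *: X.
Proof. by rewrite scalerA !mulrDr !scalerDl. Qed.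

Lemma step (A : M) (hA : commx B1 (A + 1%:M)) m1 m2 m3 :
  F14 (A + 1%:M) B1 B2 C1 C2 m1 m2 m3 = F14 A B1 B2 C1 C2 m1 m2 m3 + T (A + 1%:M) m1 m2 m3.
Proof.
have key : F14 (A + 1%:M) B1 B2 C1 C2 m1 m2 m3 - F14 A B1 B2 C1 C2 m1 m2 m3
   = (pf m1 m2 m3 * m1%:R) *: Xf A m1 m2 m3 + (pf m1 m2 m3 * m2%:R) *: Xf A m1 m2 m3
     + (pf m1 m2 m3 * m3%:R) *: Xf A m1 m2 m3.
  rewrite /F14.
  rewrite [LHS]abs_key.
  rewrite poch_diffN.
  rewrite -!scalemxAl.
  rewrite /Xf /pf !natrD.
  exact: abs_split.
rewrite /T t1 // t2 t3 // -key.
exact: abs_eq.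
Qed.
End Aux.


Section Sums.
Variables (R : realType) (r : nat).
Notation C := (R[i]).
Notation M := 'M[C]_r.

Lemma mulx1_sum (X Y : M) (s : seq nat) (f : nat -> fps R r) m1 m2 m3 :
  mulx1 (fun a b c => X *m (\sum_(i <- s) f i a b c) *m Y) m1 m2 m3
  = \sum_(i <- s) mulx1 (fun a b c => X *m f i a b c *m Y) m1 m2 m3.
Proof.
case: m1 => [|k] /=; first by rewrite big1.
by rewrite mulmx_sumr mulmx_suml.
Qed.

Lemma mulx2_sum (X Y : M) (s : seq nat) (f : nat -> fps R r) m1 m2 m3 :
  mulx2 (fun a b c => (\sum_(i <- s) f i a b c) *m X *m Y) m1 m2 m3
  = \sum_(i <- s) mulx2 (fun a b c => f i a b c *m X *m Y) m1 m2 m3.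
Proof.
case: m2 => [|k] /=; first by rewrite big1.
by rewrite !mulmx_suml.
Qed.

Lemma mulx3_sum (X Y : M) (s : seq nat) (f : nat -> fps R r) m1 m2 m3 :
  mulx3 (fun a b c => X *m (\sum_(i <- s) f i a b c) *m Y) m1 m2 m3
  = \sum_(i <- s) mulx3 (fun a b c => X *m f i a b c *m Y) m1 m2 m3.
Proof.
case: m3 => [|k] /=; first by rewrite big1.
by rewrite mulmx_sumr mulmx_suml.
Qed.
End Sums.
Lemma P1 (R : realType) (r : nat) (A1 B1 B2 C1 C2 : 'M[R[i]]_r)
  (hC1 : forall m : nat, C1 + (m%:R : R[i])%:M \in unitmx)
  (hC2 : forall m : nat, C2 + (m%:R : R[i])%:M \in unitmx)
  (hAB : A1 *m B1 = B1 *m A1)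
  (hBC1 : B2 *m C1 = C1 *m B2)
  (hBC2 : B2 *m C2 = C2 *m B2)
  (hCC : C1 *m C2 = C2 *m C1) n m1 m2 m3 :
  F14 (A1 + (n%:R : R[i])%:M) B1 B2 C1 C2 m1 m2 m3 =
    F14 A1 B1 B2 C1 C2 m1 m2 m3 +
    \sum_(1 <= i < n.+1) T B1 B2 C1 C2 (A1 + (i%:R : R[i])%:M) m1 m2 m3.
Proof.
have hst := step hC1 hC2 hBC1 hBC2 hCC.
have cB1 : commx B1 A1 by rewrite /commx hAB.
elim: n m1 m2 m3 => [|k IH] m1 m2 m3.
  by rewrite (raddf0 (@scalar_mx _ r)) addr0 big_geq // addr0.
have e1 : A1 + (k.+1%:R : R[i])%:M = (A1 + (k%:R : R[i])%:M) + 1%:M.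
  by rewrite -addrA -natr1 raddfD.
rewrite big_nat_recr //= [in LHS]e1 [LHS]hst; last by rewrite -e1; apply: commx_scalD.
rewrite [in LHS]IH -e1.
exact: esym (addrA _ _ _).
Qed.

Lemma P2 (R : realType) (r : nat) (A1 B1 B2 C1 C2 : 'M[R[i]]_r)
  (hC1 : forall m : nat, C1 + (m%:R : R[i])%:M \in unitmx)
  (hC2 : forall m : nat, C2 + (m%:R : R[i])%:M \in unitmx)
  (hAB : A1 *m B1 = B1 *m A1)
  (hBC1 : B2 *m C1 = C1 *m B2)
  (hBC2 : B2 *m C2 = C2 *m B2)
  (hCC : C1 *m C2 = C2 *m C1) n m1 m2 m3 :
  F14 (A1 - (n%:R : R[i])%:M) B1 B2 C1 C2 m1 m2 m3 =
    F14 A1 B1 B2 C1 C2 m1 m2 m3 -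
    \sum_(0 <= i < n) T B1 B2 C1 C2 (A1 - (i%:R : R[i])%:M) m1 m2 m3.
Proof.
have hst := step hC1 hC2 hBC1 hBC2 hCC.
have cB1 : commx B1 A1 by rewrite /commx hAB.
elim: n m1 m2 m3 => [|k IH] m1 m2 m3.
  by rewrite (raddf0 (@scalar_mx _ r)) subr0 big_geq // subr0.
have e2 : A1 - (k%:R : R[i])%:M = (A1 - (k.+1%:R : R[i])%:M) + 1%:M.
  by rewrite -natr1 raddfD opprD addrA subrK.
rewrite big_nat_recr //= opprD addrA -IH [in RHS]e2 [in RHS]hst.
  exact: esym (addrK _ _).
rewrite -e2.
have : commx B1 (A1 + (- (k%:R : R[i]))%:M) by apply: commx_scalD.
by rewrite raddfN.
Qed.
Lemma addr4 (V : zmodType) (x a b c : V) : x + (a + b + c) = x + a + b + c.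
Proof. by rewrite !addrA. Qed.
Lemma subr4 (V : zmodType) (x a b c : V) : x - (a + b + c) = x - a - b - c.
Proof. by rewrite !opprD !addrA. Qed.

Theorem mainTheorem19 (R : realType) (r : nat) (A1 B1 B2 C1 C2 : 'M[R[i]]_r)
  (hC1 : forall m : nat, C1 + (m%:R : R[i])%:M \in unitmx)
  (hC2 : forall m : nat, C2 + (m%:R : R[i])%:M \in unitmx)
  (hAB : A1 *m B1 = B1 *m A1)
  (hBC1 : B2 *m C1 = C1 *m B2)
  (hBC2 : B2 *m C2 = C2 *m B2)
  (hCC : C1 *m C2 = C2 *m C1)
  (n : nat) (hn : (1 <= n)%N)
  (hA : forall m : nat, A1 + (m%:R : R[i])%:M \in unitmx) :
  (forall m1 m2 m3 : nat,
     F14 (A1 + (n%:R : R[i])%:M) B1 B2 C1 C2 m1 m2 m3 =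
     F14 A1 B1 B2 C1 C2 m1 m2 m3
     + mulx1 (fun a b c => B1 *m
         (\sum_(1 <= n1 < n.+1)
            F14 (A1 + (n1%:R : R[i])%:M) (B1 + 1%:M) B2 (C1 + 1%:M) C2 a b c)
         *m invmx C1) m1 m2 m3
     + mulx2 (fun a b c =>
         (\sum_(1 <= n1 < n.+1)
            F14 (A1 + (n1%:R : R[i])%:M) B1 (B2 + 1%:M) C1 (C2 + 1%:M) a b c)
         *m B2 *m invmx C2) m1 m2 m3
     + mulx3 (fun a b c => B1 *m
         (\sum_(1 <= n1 < n.+1)
            F14 (A1 + (n1%:R : R[i])%:M) (B1 + 1%:M) B2 C1 (C2 + 1%:M) a b c)
         *m invmx C2) m1 m2 m3)
  /\
  ((forall n1 : nat, (n1 <= n)%N -> A1 - (n1%:R : R[i])%:M \in unitmx) ->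
   forall m1 m2 m3 : nat,
     F14 (A1 - (n%:R : R[i])%:M) B1 B2 C1 C2 m1 m2 m3 =
     F14 A1 B1 B2 C1 C2 m1 m2 m3
     - mulx1 (fun a b c => B1 *m
         (\sum_(0 <= n1 < n)
            F14 (A1 - (n1%:R : R[i])%:M) (B1 + 1%:M) B2 (C1 + 1%:M) C2 a b c)
         *m invmx C1) m1 m2 m3
     - mulx2 (fun a b c =>
         (\sum_(0 <= n1 < n)
            F14 (A1 - (n1%:R : R[i])%:M) B1 (B2 + 1%:M) C1 (C2 + 1%:M) a b c)
         *m B2 *m invmx C2) m1 m2 m3
     - mulx3 (fun a b c => B1 *m
         (\sum_(0 <= n1 < n)
            F14 (A1 - (n1%:R : R[i])%:M) (B1 + 1%:M) B2 C1 (C2 + 1%:M) a b c)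
         *m invmx C2) m1 m2 m3).
Proof.
split.
  move=> m1 m2 m3.
  rewrite mulx1_sum mulx2_sum mulx3_sum [LHS](P1 hC1 hC2 hAB hBC1 hBC2 hCC).
  rewrite !big_split /=.
  exact: addr4.
move=> _ m1 m2 m3.
rewrite mulx1_sum mulx2_sum mulx3_sum [LHS](P2 hC1 hC2 hAB hBC1 hBC2 hCC).
rewrite !big_split /=.
exact: subr4.
Qed.
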